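(* Let $\mathcal M_{A,\partial}$ be an $M$-complex with $A=\{a_1\prec\dots\prec a_N\}$. For $k\le N$ write $A^k=\{a_1\prec\dots\prec a_k\}$ and let $\iota_*$ denote the map in homology induced by the inclusion $\mathbb E(A^j)\hookrightarrow\mathbb E(A)$. (1) An element $a_j\in A$ of degree $l$ is $\partial$-homologically essential if and only if $\dim\iota_*(H_l(\mathbb E(A^j),\partial))=\dim\iota_*(H_l(\mathbb E(A^{j-1}),\partial))+1$. The number of homologically essential elements of degree $k$ equals $\dim H_k(\mathcal M_{A,\partial})$. (2) An element $a_i\in A$ is not homologically essential if and only if $\iota_*H_*(\mathbb E(A^i),\partial)=\iota_*H_*(\mathbb E(A^{i-1}),\partial)$. (3) Elements $a_m,a_n\in A$ with $m>n$ form a $\partial$-pair if and only if $\dim H_*(\mathbb E(A^m),\mathbb E(A^n),\partial)=\dim H_*(\mathbb E(A^{m-1}),\mathbb E(A^{n-1}),\partial)=\dim H_*(\mathbb E(A^{m-1}),\mathbb E(A^n),\partial)+1=\dim H_*(\mathbb E(A^m),\mathbb E(A^{n-1}),\partial)+1.$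
   Context: $\mathbb E$ is a field. An $M$-complex $\mathcal M_{A,\partial}$: $A=\{a_1\prec\dots\prec a_N\}$ a finite linearly ordered set with grading $\deg:A\to\mathbb Z$, $\mathbb E(A)$ the graded vector space with basis $A$, and $\partial$ a degree $-1$ linear map with $\partial^2=0$ and $\partial(a_i)\in\mathrm{span}\{a_1,\dots,a_{i-1}\}$ for all $i$ (an $M$-differential). Each $\mathbb E(A^k)$ is a subcomplex, $\dim H_*$ denotes total dimension and relative homology is that of the quotient complex. $\mathrm{Aut}_T(A)$ is the group of graded automorphisms preserving each $\mathrm{span}\{a_1,\dots,a_i\}$; $M$-differentials $\partial_1,\partial_2$ are equivalent if $\partial_2=g\partial_1g^{-1}$, $g\in\mathrm{Aut}_T(A)$. An $M$-differential is elementary if for each $a\in A$ either $\partial(a)=0$ or $\partial(a)=b$ for some $b\in A$, and $\partial(x)=\partial(y)=z$ with $x,y,z\in A$ implies $x=y$. It is known (Barannikov) that every $M$-differential $\partial$ is equivalent to a unique elementary $M$-differential $\partial_1$. Elements $a_i,a_j$ form a $\partial$-pair if $\partial_1(a_i)=a_j$; an element is $\partial$-homologically essential if it belongs to no $\partial$-pair. *)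

(* Defs.v *)
(* An M-complex over a field E on the ordered basis
   A = {a_1 < ... < a_N}, encoded as 'I_N (a_{i+1} <-> ordinal i).
   Vectors of E(A) are row vectors 'rV[E]_N; a linear map f is a matrix F
   acting on the right: v |-> v *m F (so row i of F is f(a_{i+1})). *)
From HB Require Import structures.
From mathcomp Require Import all_boot all_order all_algebra.
Set Implicit Arguments. Unset Strict Implicit. Unset Printing Implicit Defensive.
Import Order.TTheory GRing.Theory Num.Theory.
Local Open Scope ring_scope.

Section MComplex.
Variables (E : fieldType) (N : nat) (deg : 'I_N -> int).

Definition bvec (i : 'I_N) : 'rV[E]_N := delta_mx 0 i.

Definition Mdiff (D : 'M[E]_N) : Prop :=
  [/\ (forall i j, D i j != 0 -> deg j = deg i - 1),
      D *m D = 0 &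
      (forall i j, D i j != 0 -> (j < i)%N)].

Definition AutT (G : 'M[E]_N) : Prop :=
  [/\ G \in unitmx,
      (forall i j, G i j != 0 -> deg j = deg i) &
      (forall i j, G i j != 0 -> (j <= i)%N)].

(* D2 = g D1 g^{-1}  (g^{-1} applied first) *)
Definition equivM (D1 D2 : 'M[E]_N) : Prop :=
  exists G, AutT G /\ D2 = invmx G *m D1 *m G.

Definition elementary (D : 'M[E]_N) : Prop :=
  (forall i, row i D = 0 \/ exists j, row i D = bvec j) /\
  (forall x y z, row x D = bvec z -> row y D = bvec z -> x = y).

(* a_i, a_j form a D-pair: D1(a_i) = a_j for the elementary D1 equivalent
   to D (unique by Barannikov's theorem) *)
Definition dpair (D : 'M[E]_N) (i j : 'I_N) : Prop :=
  exists D1, Mdiff D1 /\ elementary D1 /\ equivM D D1 /\ row i D1 = bvec j.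

Definition essential (D : 'M[E]_N) (i : 'I_N) : Prop :=
  forall j, ~ dpair D i j /\ ~ dpair D j i.

Definition subA (k : nat) : 'M[E]_N :=
  (\sum_(i : 'I_N | (i < k)%N) <<bvec i>>)%MS.

Definition gradedA (l : int) : 'M[E]_N :=
  (\sum_(i : 'I_N | deg i == l) <<bvec i>>)%MS.

Definition cyclesA (D : 'M[E]_N) (l : int) (k : nat) : 'M[E]_N :=
  (subA k :&: gradedA l :&: kermx D)%MS.

Definition boundA (D : 'M[E]_N) (l : int) : 'M[E]_N :=
  (gradedA (l + 1) *m D)%MS.

Definition homdim (D : 'M[E]_N) (l : int) : nat :=
  (\rank (cyclesA D l N) - \rank (boundA D l))%N.

(* dim iota_*(H_l(E(A^k))) inside H_l(E(A)) = dim (Z_l(A^k) + B_l(A)) / B_l(A) *)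
Definition imdim (D : 'M[E]_N) (l : int) (k : nat) : nat :=
  (\rank (cyclesA D l k + boundA D l) - \rank (boundA D l))%N.

Definition tcycles (D : 'M[E]_N) (k : nat) : 'M[E]_N := (subA k :&: kermx D)%MS.
Definition tbound (D : 'M[E]_N) : 'M[E]_N := D.

(* iota_* H_*(E(A^k)) as a subspace of H_*(E(A)) = Z/B, represented
   (correspondence theorem) by its preimage Z(A^k) + B in Z *)
Definition imH (D : 'M[E]_N) (k : nat) : 'M[E]_N := (tcycles D k + tbound D)%MS.

(* dim H_*(E(A^m), E(A^n)) for n <= m: homology of the quotient complex
   E(A^m)/E(A^n); relative cycles {x in E(A^m) | x D in E(A^n)} (which
   contain E(A^n)) modulo relative boundaries E(A^m) D + E(A^n). *)
Definition relcycles (D : 'M[E]_N) (m n : nat) : 'M[E]_N :=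
  (subA m :&: kermx (D *m cokermx (subA n)))%MS.
Definition relhomdim (D : 'M[E]_N) (m n : nat) : nat :=
  (\rank (relcycles D m n) - \rank (subA m *m D + subA n))%N.

End MComplex.

(* Main.v *)
Require Import Defs.
From HB Require Import structures.
From mathcomp Require Import all_boot all_order all_algebra.
From mathcomp Require Import zify.
Set Implicit Arguments. Unset Strict Implicit. Unset Printing Implicit Defensive.
Import Order.TTheory GRing.Theory Num.Theory.
Local Open Scope ring_scope.

Section Basics.
Variables (E : fieldType) (N : nat).

Definition S (P : pred 'I_N) : 'M[E]_N := (\sum_(i | P i) <<bvec E i>>)%MS.

Definition dmx (P : pred 'I_N) : 'M[E]_N := diag_mx (\row_j (P j)%:R).

Lemma bvec_dmx (P : pred 'I_N) i : P i -> bvec E i = bvec E i *m dmx P.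
Proof.
move=> Pi; apply/rowP=> j; rewrite /bvec /dmx mul_mx_diag !mxE.
case: (eqVneq j i) => [->|ji]; first by rewrite eqxx Pi mulr1. by rewrite andbF mul0r.
Qed.

Lemma memS (P : pred 'I_N) (v : 'rV[E]_N) :
  (v <= S P)%MS = [forall j, ~~ P j ==> (v 0 j == 0)].
Proof.
apply/idP/forallP.
- move=> vS j; apply/implyP=> nPj.
  have : (S P <= dmx P)%MS.
    apply/sumsmx_subP=> i Pi; rewrite genmxE (bvec_dmx Pi).
    exact: submxMl.
  move=> /(submx_trans vS)/submxP[w ->].
  by rewrite /dmx mul_mx_diag !mxE (negbTE nPj) mulr0.
- move=> H; rewrite (row_sum_delta v); apply: summx_sub => j _.
  case Pj: (P j).
    by apply: scalemx_sub; apply: (sumsmx_sup j) => //; rewrite genmxE.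
  by have := H j; rewrite Pj /= => /eqP->; rewrite scale0r sub0mx.
Qed.

Lemma eqmx_rows (X Y : 'M[E]_N) :
  (forall v : 'rV[E]_N, (v <= X)%MS = (v <= Y)%MS) -> (X :=: Y)%MS.
Proof.
move=> H; apply/eqmxP/andP; split; apply/row_subP=> i.
  by rewrite -H row_sub.
by rewrite H row_sub.
Qed.

Lemma memSP (P : pred 'I_N) (v : 'rV[E]_N) :
  (v <= S P)%MS <-> (forall j, ~~ P j -> v 0 j = 0).
Proof.
rewrite memS; split.
  by move=> /forallP H j nP; move: (H j); rewrite nP => /eqP.
by move=> H; apply/forallP=> j; apply/implyP=> /H ->.
Qed.

Lemma S_ext (P Q : pred 'I_N) : P =1 Q -> S P = S Q.
Proof. by move=> PQ; rewrite /S; apply: eq_bigl. Qed.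

Lemma capS (P Q : pred 'I_N) : (S P :&: S Q :=: S (fun i => P i && Q i))%MS.
Proof.
apply: eqmx_rows=> v; rewrite sub_capmx !memS.
apply/andP/forallP.
- case=> /forallP H1 /forallP H2 j; apply/implyP; rewrite negb_and.
  by case/orP=> [/(implyP (H1 j))|/(implyP (H2 j))].
- move=> H; split; apply/forallP=> j; apply/implyP=> nP; apply: (implyP (H j)).
  + by rewrite negb_and nP.
  + by rewrite negb_and nP orbT.
Qed.

Lemma bvecS (P : pred 'I_N) i : P i -> (bvec E i <= S P)%MS.
Proof. by move=> Pi; apply: (sumsmx_sup i) => //; rewrite genmxE. Qed.

Lemma SS (P Q : pred 'I_N) : (forall i, P i -> Q i) -> (S P <= S Q)%MS.
Proof.
by move=> PQ; apply/sumsmx_subP=> i Pi; rewrite genmxE; apply: bvecS; apply: PQ.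
Qed.

Lemma addS (P Q : pred 'I_N) : (S P + S Q :=: S (fun i => P i || Q i))%MS.
Proof.
apply/eqmxP/andP; split.
  by rewrite addsmx_sub !SS // => i ->; rewrite ?orbT.
apply/sumsmx_subP=> i /orP[Pi|Qi]; rewrite genmxE.
  by apply: submx_trans (addsmxSl _ _); apply: bvecS.
by apply: submx_trans (addsmxSr _ _); apply: bvecS.
Qed.

Lemma S_full : (S predT :=: 1%:M)%MS.
Proof.
apply/eqmxP/andP; split; first exact: submx1.
apply/row_subP=> i; rewrite memS; apply/forallP=> j; by [].
Qed.

Lemma rankS_le (P : pred 'I_N) : (\rank (S P) <= #|P|)%N.
Proof.
rewrite /S -sum1_card.
apply: (big_ind2 (fun (X : 'M[E]_N) (n : nat) => \rank X <= n)%N).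
- by rewrite mxrank0.
- move=> X1 n1 X2 n2 h1 h2; apply: leq_trans (mxrank_adds_leqif _ _) _.
  exact: leq_add.
- by move=> i _; rewrite genmxE mxrank_delta.
Qed.

Lemma rankS (P : pred 'I_N) : \rank (S P) = #|P|.
Proof.
apply/eqP; rewrite eqn_leq rankS_le /=.
have h1 := rankS_le (predC P).
have h2 : (N <= \rank (S P) + \rank (S (predC P)))%N.
  apply: leq_trans (mxrank_adds_leqif _ _).
  rewrite (eqmx_rank (_ : (_ == 1%:M)%MS)) ?mxrank1 //.
  apply/eqmxP; apply: eqmx_trans (addS _ _) _.
  rewrite (@S_ext _ predT); first exact: S_full.
  by move=> i /=; rewrite orbN.
have h3 := cardC P; rewrite card_ord in h3.
have h4 : #|[predC P]| = #|predC P| by apply: eq_card. move: h2; rewrite -{1}h3 h4 => h2. rewrite -(leq_add2r #|predC P|); apply: leq_trans h2 _; by rewrite leq_add2l.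
Qed.

Lemma eqS (P Q : pred 'I_N) : (S P == S Q)%MS = [forall i, P i == Q i].
Proof.
apply/idP/forallP.
- move=> /eqmxP e i; apply/eqP.
  have h1 : (bvec E i <= S P)%MS = P i.
    apply/idP/idP; last exact: bvecS.
    move/memSP=> h; apply/negPn/negP=> /h; rewrite /bvec mxE !eqxx /=.
    by move/eqP; rewrite oner_eq0.
  have h2 : (bvec E i <= S Q)%MS = Q i.
    apply/idP/idP; last exact: bvecS.
    move/memSP=> h; apply/negPn/negP=> /h; rewrite /bvec mxE !eqxx /=.
    by move/eqP; rewrite oner_eq0.
  by rewrite -h1 -h2 e.
- by move=> h; rewrite (@S_ext P Q) ?submx_refl // => i; apply/eqP.
Qed.
End Basics.
Arguments S {E N} P.
Arguments capS {E N} P Q.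
Arguments addS {E N} P Q.
Arguments S_full {E N}.
Arguments eqS {E N} P Q.
Arguments rankS {E N} P.
Arguments rankS_le {E N} P.
Arguments SS {E N} P Q.
Arguments dmx {E N} P.
Section Transport.
Variables (E : fieldType) (N : nat) (deg : 'I_N -> int).

Lemma subAE k : subA E N k = S (fun i : 'I_N => (i < k)%N).
Proof. by []. Qed.
Lemma gradedAE l : gradedA E deg l = S (fun i => deg i == l).
Proof. by []. Qed.

Lemma entry_stable (M : 'M[E]_N) (P Q : pred 'I_N) :
  (forall i j, M i j != 0 -> P i -> Q j) -> (S P *m M <= S Q)%MS.
Proof.
move=> H; rewrite /S sumsmxMr; apply/sumsmx_subP=> i Pi.
rewrite (eqmxMr M (genmxE (bvec E i))) /bvec -rowE; apply/memSP=> j nQ.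
rewrite mxE; apply/eqP; apply/negPn/negP=> nz.
by move: nQ; rewrite (H _ _ nz Pi).
Qed.

Lemma stable_inv (U X : 'M[E]_N) : U \in unitmx ->
  (X *m U <= X)%MS -> (X *m invmx U <= X)%MS.
Proof.
move=> uU sXU.
have e : (X <= X *m U)%MS.
  by rewrite -(mxrank_leqif_sup sXU) mxrankMfree // row_free_unit.
by rewrite -[X in (_ <= X)%MS](mulmxK uU) submxMr.
Qed.

Lemma memM (G X : 'M[E]_N) (v : 'rV[E]_N) : G \in unitmx ->
  (v <= X *m G)%MS = (v *m invmx G <= X)%MS.
Proof. by move=> uG; rewrite -{1}(mulmxKV uG v) submxMfree // row_free_unit. Qed.

Lemma mulmx_free_eq0' (G : 'M[E]_N) (v : 'rV[E]_N) : G \in unitmx ->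
  (v *m G == 0) = (v == 0).
Proof.
move=> uG; apply/eqP/eqP=> [h|->]; last by rewrite mul0mx.
by rewrite -(mulmxK uG v) h mul0mx.
Qed.

Definition pres (G X : 'M[E]_N) := (X *m G <= X)%MS && (X *m invmx G <= X)%MS.

Lemma presE (G X : 'M[E]_N) : G \in unitmx -> pres G X -> (X *m G :=: X)%MS.
Proof.
move=> uG /andP[h1 h2]; apply/eqmxP/andP; split=> //.
by rewrite -[X in (X <= _)%MS](mulmxKV uG) submxMr.
Qed.

Lemma presM (G X : 'M[E]_N) (v : 'rV[E]_N) : G \in unitmx -> pres G X ->
  (v <= X)%MS = (v *m invmx G <= X)%MS.
Proof. by move=> uG pX; rewrite -memM // (presE uG pX). Qed.

Lemma presM' (G X : 'M[E]_N) (v : 'rV[E]_N) : G \in unitmx -> pres G X ->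
  (v *m G <= X)%MS = (v <= X)%MS.
Proof. by move=> uG pX; rewrite (presM _ uG pX) mulmxK. Qed.

Lemma eqmx_memM (G Y Y' : 'M[E]_N) : G \in unitmx ->
  (forall v : 'rV[E]_N, (v <= Y')%MS = (v *m invmx G <= Y)%MS) ->
  (Y' :=: Y *m G)%MS.
Proof. by move=> uG H; apply: eqmx_rows=> v; rewrite H memM. Qed.

Lemma AutT_pres (G : 'M[E]_N) : AutT deg G ->
  (forall k, pres G (subA E N k)) /\ (forall l, pres G (gradedA E deg l)).
Proof.
case=> uG gG tG.
have h1 (P : pred 'I_N) : (forall i j, G i j != 0 -> P i -> P j) -> pres G (S P).
  move=> HP; have s1 : (S P *m G <= S P)%MS by apply: entry_stable.
  by rewrite /pres s1 stable_inv.
split=> [k|l].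
  apply: h1 => i j /tG ji ik; exact: leq_ltn_trans ji ik.
by apply: h1 => i j /gG -> .
Qed.

Section Conj.
Variables (G D : 'M[E]_N).
Hypothesis aG : AutT deg G.
Let D' := invmx G *m D *m G.
Let uG : G \in unitmx. Proof. by case: aG. Qed.
Let pA := proj1 (AutT_pres aG).
Let pG := proj2 (AutT_pres aG).

Lemma ker_conj (v : 'rV[E]_N) : (v <= kermx D')%MS = (v *m invmx G <= kermx D)%MS.
Proof. by rewrite !sub_kermx /D' !mulmxA mulmx_free_eq0'. Qed.

Lemma cycles_conj l k : (cyclesA deg D' l k :=: cyclesA deg D l k *m G)%MS.
Proof.
apply: eqmx_memM=> // v.
by rewrite /cyclesA !sub_capmx ker_conj -(presM _ uG (pA k)) -(presM _ uG (pG l)).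
Qed.

Lemma presMD (X : 'M[E]_N) : pres G X -> (X *m D' :=: X *m D *m G)%MS.
Proof.
move=> pX; rewrite /D' !mulmxA.
have e : (X *m invmx G :=: X)%MS.
  by apply: presE; rewrite ?unitmx_inv // /pres invmxK andbC.
by apply: eqmxMr; apply: eqmxMr; apply: e.
Qed.

Lemma bound_conj l : (boundA deg D' l :=: boundA deg D l *m G)%MS.
Proof. exact: presMD. Qed.

Lemma imdim_conj l k : imdim deg D' l k = imdim deg D l k.
Proof.
rewrite /imdim.
have e : (cyclesA deg D' l k + boundA deg D' l :=: (cyclesA deg D l k + boundA deg D l)%MS *m G)%MS.
  have e1 := adds_eqmx (cycles_conj l k) (bound_conj l).
  have e2 := eqmx_sym (addsmxMr (cyclesA deg D l k) (boundA deg D l) G).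
  exact: eqmx_trans e1 e2.
have fG : row_free G by rewrite row_free_unit.
by rewrite e (bound_conj l) !(mxrankMfree _ fG).
Qed.

Lemma homdim_conj l : homdim deg D' l = homdim deg D l.
Proof.
by rewrite /homdim (cycles_conj l N) (bound_conj l) !(mxrankMfree _ (_ : row_free G)) // row_free_unit uG.
Qed.

Lemma imH_conj k : (imH D' k :=: imH D k *m G)%MS.
Proof.
rewrite /imH.
have e1 : (tcycles D' k :=: tcycles D k *m G)%MS.
  apply: eqmx_memM=> // v.
  by rewrite /tcycles !sub_capmx ker_conj -(presM _ uG (pA k)).
have e2 : (tbound D' :=: tbound D *m G)%MS.
  rewrite /tbound /D' -mulmxA; apply: eqmxMfull.
  by rewrite row_full_unit unitmx_inv.
exact: eqmx_trans (adds_eqmx e1 e2) (eqmx_sym (addsmxMr _ _ _)).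
Qed.

Lemma imH_conj_eq a b : (imH D' a == imH D' b)%MS = (imH D a == imH D b)%MS.
Proof.
have fG : row_free G by rewrite row_free_unit.
apply/eqmxP/eqmxP=> e.
  have e' := eqmx_trans (eqmx_trans (eqmx_sym (imH_conj a)) e) (imH_conj b).
  by move/eqmxP: e'; rewrite !submxMfree //; move/eqmxP.
exact: eqmx_trans (eqmx_trans (imH_conj a) (eqmxMr G e)) (eqmx_sym (imH_conj b)).
Qed.

Lemma relcycles_conj m n : (relcycles D' m n :=: relcycles D m n *m G)%MS.
Proof.
apply: eqmx_memM=> // v.
rewrite /relcycles !sub_capmx -(presM _ uG (pA m)) !sub_kermx.
rewrite !(mulmxA _ _ (cokermx _)) -!submxE /D' !mulmxA.
by rewrite (presM' _ uG (pA n)).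
Qed.

Lemma relhomdim_conj m n : relhomdim D' m n = relhomdim D m n.
Proof.
rewrite /relhomdim relcycles_conj.
have e : (subA E N m *m D' + subA E N n :=: (subA E N m *m D + subA E N n)%MS *m G)%MS.
  have e1 := adds_eqmx (presMD (pA m)) (eqmx_sym (presE uG (pA n))).
  exact: eqmx_trans e1 (eqmx_sym (addsmxMr _ _ _)).
by rewrite e !(mxrankMfree _ (_ : row_free G)) // row_free_unit uG.
Qed.
End Conj.
End Transport.
Section Elem.
Variables (E : fieldType) (N : nat) (deg : 'I_N -> int) (p : 'I_N -> option 'I_N).

Definition Pm : 'M[E]_N := \matrix_(i, j) (p i == Some j)%:R.
Definition target j := [exists i, p i == Some j].
Definition ess i := (p i == None) && ~~ target i.

Hypothesis pinj : forall i i' j, p i = Some j -> p i' = Some j -> i = i'.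

Lemma row_Pm i : row i Pm = if p i is Some j then bvec E j else 0.
Proof.
apply/rowP=> j; rewrite !mxE; case: (p i) => [k|]; last by rewrite mxE.
by rewrite /bvec mxE eqxx /= eq_sym.
Qed.

Lemma vPm_src (v : 'rV[E]_N) i j : p i = Some j -> (v *m Pm) 0 j = v 0 i.
Proof.
move=> pij; rewrite mxE (bigD1 i) //= big1 ?addr0.
  by rewrite mxE pij eqxx mulr1.
move=> k ki; rewrite mxE; case: eqP => [pk|]; last by rewrite mulr0.
by move: ki; rewrite (pinj pk pij) eqxx.
Qed.

Lemma vPm_nt (v : 'rV[E]_N) j : ~~ target j -> (v *m Pm) 0 j = 0.
Proof.
move=> nt; rewrite mxE big1 // => k _; rewrite mxE; case: eqP => [pk|]; last by rewrite mulr0.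
by move: nt; rewrite /target; case/existsP; exists k; rewrite pk.
Qed.

Lemma vPmS (Q : pred 'I_N) (v : 'rV[E]_N) :
  (v *m Pm <= S Q)%MS <-> (forall i j, p i = Some j -> ~~ Q j -> v 0 i = 0).
Proof.
rewrite memSP; split.
  by move=> H i j pij nQ; rewrite -(vPm_src v pij); apply: H.
move=> H j nQ; case tj: (target j); last by rewrite vPm_nt ?tj.
case/existsP: tj => i /eqP pij; rewrite (vPm_src v pij); exact: H nQ.
Qed.

Lemma kerPm : (kermx Pm :=: S (fun i => (p i == None)%B))%MS.
Proof.
apply: eqmx_rows=> v; rewrite sub_kermx.
have -> : (v *m Pm == 0) = (v *m Pm <= S pred0)%MS.
  apply/eqP/idP=> [->|/memSP H]; first by rewrite sub0mx.
  by apply/rowP=> j; rewrite [RHS]mxE H.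
apply/idP/idP.
  move/vPmS=> H; apply/memSP=> i; case Hp: (p i) => [j|] // _.
  exact: (H i j Hp).
move/memSP=> H; apply/vPmS=> i j pij _; apply: H; by rewrite pij.
Qed.

Lemma SPm (P : pred 'I_N) :
  (S P *m Pm :=: S (fun j => [exists i, P i && (p i == Some j)%B]))%MS.
Proof.
apply/eqmxP/andP; split.
  apply: entry_stable=> i j; rewrite mxE => nz Pi; apply/existsP; exists i.
  by move: nz; rewrite Pi; case: (p i == Some j) => //; rewrite eqxx.
apply/sumsmx_subP=> j /existsP[i /andP[Pi /eqP pij]]; rewrite genmxE.
have -> : bvec E j = bvec E i *m Pm by rewrite /bvec -rowE row_Pm pij.
by apply: submxMr; apply: bvecS.
Qed.

Lemma PmE : (Pm :=: S target)%MS.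
Proof.
have e1 : (Pm :=: S predT *m Pm)%MS.
  by rewrite -{1}(mul1mx Pm); exact: eqmx_sym (eqmxMr Pm (@S_full E N)).
apply: eqmx_trans e1 _; apply: eqmx_trans (SPm _) _.
by rewrite (@S_ext _ _ _ target) // => j.
Qed.

Lemma card_sub_pred (A B : pred 'I_N) : (forall s, B s -> A s) ->
  (#|A| - #|B|)%N = #|(fun s => A s && ~~ B s)|.
Proof.
move=> BA; rewrite -(cardID B A).
have -> : #|[predI A & B]| = #|B|.
  apply: eq_card=> s /=; rewrite !inE -!topredE /=.
  by case Bs: (B s); rewrite ?andbF ?(BA _ Bs).
rewrite -addnBAC // subnn add0n; apply: eq_card=> s; by rewrite !inE -!topredE /= andbC.
Qed.

Lemma imH_Pm k : (imH Pm k :=: S (fun s => ((s < k)%N && (p s == None)%B) || target s))%MS.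
Proof.
rewrite /imH /tcycles /tbound subAE.
have e1 := eqmx_trans (cap_eqmx (eqmx_refl (S (fun i : 'I_N => (i < k)%N))) kerPm) (capS _ _).
exact: eqmx_trans (adds_eqmx e1 PmE) (addS _ _).
Qed.

Lemma imH_eq_Pm (i : 'I_N) : (imH Pm i.+1 == imH Pm i)%MS = ~~ ess i.
Proof.
have e : forall (X Y X' Y' : 'M[E]_N), (X :=: X')%MS -> (Y :=: Y')%MS ->
    (X == Y)%MS = (X' == Y')%MS.
  by move=> X Y X' Y' e1 e2; apply/eqmxP/eqmxP=> h;
    [exact: eqmx_trans (eqmx_trans (eqmx_sym e1) h) e2 |
     exact: eqmx_trans (eqmx_trans e1 h) (eqmx_sym e2)].
rewrite (e _ _ _ _ (imH_Pm i.+1) (imH_Pm i)) eqS /ess.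
apply/forallP/idP.
  move=> /(_ i); rewrite ltnSn ltnn /=.
  by case: (p i) => [j|] //=; case: (target i).
move=> H s; case: (eqVneq s i) => [->|ne].
  rewrite ltnSn ltnn /=; move: H; case: (p i) => [j|] //=; by case: (target i).
have ne' : (nat_of_ord s != nat_of_ord i) by [].
by rewrite ltnS leq_eqVlt (negbTE ne').
Qed.
End Elem.
Section Elem2.
Variables (E : fieldType) (N : nat) (deg : 'I_N -> int) (p : 'I_N -> option 'I_N).
Hypothesis pinj : forall i i' j, p i = Some j -> p i' = Some j -> i = i'.
Hypothesis pdeg : forall i j, p i = Some j -> deg j = deg i - 1.
Hypothesis plt : forall i j, p i = Some j -> (j < i)%N.
Hypothesis pnil : forall i j, p i = Some j -> p j = None.

Local Notation Pm := (Pm E p).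

Lemma cycles_Pm l k : (cyclesA deg Pm l k :=:
   S (fun s => [&& (s < k)%N, deg s == l & (p s == None)%B]))%MS.
Proof.
rewrite /cyclesA subAE gradedAE.
have e1 := eqmx_trans (cap_eqmx (capS (fun i : 'I_N => (i < k)%N) (fun i => deg i == l))
   (kerPm E pinj)) (capS _ _).
apply: eqmx_trans e1 _; rewrite (@S_ext _ _ _ (fun s => [&& (s < k)%N, deg s == l & (p s == None)%B])) //.
by move=> s; rewrite andbA.
Qed.

Lemma bound_Pm l : (boundA deg Pm l :=:
   S (fun j => [exists i, (deg i == (l + 1)%R)%B && (p i == Some j)%B]))%MS.
Proof. exact: SPm. Qed.

Lemma tgt_deg s : target p s = [exists i, (deg i == deg s + 1) && (p i == Some s)%B].
Proof.
apply/existsP/existsP=> [[i /eqP pis]|[i /andP[_ pis]]]; exists i => //.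
by rewrite (pdeg pis) subrK eqxx pis eqxx.
Qed.

Lemma imdim_Pm l k : imdim deg Pm l k = #|(fun s : 'I_N => [&& (s < k)%N, deg s == l & ess p s])|.
Proof.
rewrite /imdim (eqmx_trans (adds_eqmx (cycles_Pm l k) (bound_Pm l)) (addS _ _)).
rewrite (bound_Pm l) !rankS card_sub_pred; last by move=> s ->; rewrite orbT.
apply: eq_card=> s; rewrite -!topredE /= /ess.
case: (eqVneq (deg s) l) => [<-|_]; last by rewrite !andbF /= andbN.
rewrite ?eqxx /= tgt_deg.
by case: (s < k)%N; case: (p s == None); case: [exists _, _].
Qed.

Lemma homdim_Pm l : homdim deg Pm l = #|(fun s : 'I_N => ess p s && (deg s == l))|.
Proof.
rewrite /homdim (cycles_Pm l N) (bound_Pm l) !rankS card_sub_pred; last first.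
  move=> s /existsP[i /andP[/eqP di /eqP pis]].
  by rewrite ltn_ord (pdeg pis) di addrK eqxx (pnil pis) eqxx.
apply: eq_card=> s; rewrite -!topredE /= /ess ltn_ord /=.
case: (eqVneq (deg s) l) => [<-|_]; last by rewrite !andbF.
rewrite ?eqxx /= tgt_deg.
by case: (p s == None); case: [exists _, _].
Qed.

Definition RC (n : nat) (s : 'I_N) := if p s is Some j then (j < n)%N else true.
Definition RA (m n : nat) := fun s : 'I_N => (s < m)%N && RC n s.
Definition RB (m n : nat) := fun j : 'I_N => [exists i : 'I_N, (i < m)%N && (p i == Some j)] || (j < n)%N.

Lemma relcycles_Pm m n : (relcycles Pm m n :=: S (RA m n))%MS.
Proof.
apply: eqmx_rows=> v; rewrite /relcycles sub_capmx sub_kermx mulmxA -submxE subAE.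
apply/idP/idP.
- case/andP=> /memSP h1 /vPmS h2; apply/memSP=> s; rewrite /RA negb_and => /orP[/h1 //|].
  rewrite /RC; case ps: (p s) => [j|] // => /h2; exact.
- move/memSP=> H; apply/andP; split.
    by apply/memSP=> s ns; apply: H; rewrite /RA negb_and ns.
  apply/vPmS => // i j pij nj; apply: H; by rewrite /RA /RC pij negb_and nj orbT.
Qed.

Lemma relbound_Pm m n : (subA E N m *m Pm + subA E N n :=: S (RB m n))%MS.
Proof.
rewrite !subAE; apply: eqmx_trans (adds_eqmx (SPm _ _ _) (eqmx_refl _)) _.
exact: addS.
Qed.

Lemma relhomdim_Pm m n : relhomdim Pm m n = (#|RA m n| - #|RB m n|)%N.
Proof. by rewrite /relhomdim relcycles_Pm relbound_Pm !rankS. Qed.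

Lemma RB_RA m n : (n <= m)%N -> forall s, RB m n s -> RA m n s.
Proof.
move=> nm s; rewrite /RB /RA /RC => /orP[/existsP[i /andP[im /eqP pis]]|sn].
  by rewrite (pnil pis) andbT (ltn_trans (plt pis) im).
rewrite (leq_trans sn nm) /=; case ps: (p s) => [j|] //.
exact: ltn_trans (plt ps) sn.
Qed.

Lemma card_add1 (A A' : pred 'I_N) x : (forall s, A' s = A s || (s == x)) ->
  #|A'| = (#|A| + ~~ A x)%N.
Proof.
move=> H.
rewrite (cardD1 x A') (cardD1 x A).
have -> : #|[predD1 A' & x]| = #|[predD1 A & x]|.
  by apply: eq_card=> s; rewrite !inE -!topredE /= H; case: (s == x); rewrite ?orbF.
have -> : x \in A' by rewrite -topredE /= H eqxx orbT.
have -> : A x = (x \in A) by rewrite -topredE.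
by case: (x \in A); rewrite /= ?addn0 ?add0n // addnC.
Qed.
End Elem2.
Section Elem3.
Variables (E : fieldType) (N : nat) (deg : 'I_N -> int) (p : 'I_N -> option 'I_N).
Hypothesis pinj : forall i i' j, p i = Some j -> p i' = Some j -> i = i'.
Hypothesis plt : forall i j, p i = Some j -> (j < i)%N.
Hypothesis pnil : forall i j, p i = Some j -> p j = None.

Lemma ltS_ord (s k : 'I_N) : (s < k.+1)%N = (s < k)%N || (s == k).
Proof.
by rewrite ltnS leq_eqVlt orbC.
Qed.

Lemma cnt_lt (Q : pred 'I_N) (k : 'I_N) :
  #|(fun s : 'I_N => (s < k.+1)%N && Q s)| = (#|(fun s : 'I_N => (s < k)%N && Q s)| + Q k)%N.
Proof.
case Qk: (Q k).
  rewrite (@card_add1 _ (fun s : 'I_N => (s < k)%N && Q s) _ k); first by rewrite ltnn.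
  move=> s; rewrite ltS_ord; case: (eqVneq s k) => [->|_]; first by rewrite Qk !orbT andbT.
  by rewrite !orbF.
rewrite addn0; apply: eq_card=> s; rewrite -!topredE /= ltS_ord.
by case: (eqVneq s k) => [->|_]; rewrite ?Qk ?andbF ?orbF.
Qed.

Lemma cardRA_m (m : 'I_N) n : #|RA p m.+1 n| = (#|RA p m n| + RC p n m)%N.
Proof. exact: cnt_lt. Qed.

Lemma cardRA_n m (n : 'I_N) :
  #|RA p m n.+1| = (#|RA p m n| + [exists i : 'I_N, (i < m)%N && (p i == Some n)])%N.
Proof.
case: existsP => [[i /andP[im /eqP pin]] | no].
  rewrite (@card_add1 _ (RA p m n) _ i); first by rewrite /RA /RC pin ltnn andbF.
  move=> s; rewrite /RA /RC; case: (eqVneq s i) => [->|si]; first by rewrite pin im ltnSn orbT.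
  rewrite orbF; case ps: (p s) => [j|] //; rewrite [(j < n.+1)%N]ltnS [(j <= n)%N]leq_eqVlt.
  case: (eqVneq (nat_of_ord j) n) => [jn|]; last by [].
  have jn' : j = n by apply: val_inj.
  by move: si; rewrite jn' in ps; rewrite (pinj ps pin) eqxx.
rewrite addn0; apply: eq_card=> s; rewrite -!topredE /= /RA /RC.
case ps: (p s) => [j|] //; rewrite [(j < n.+1)%N]ltnS [(j <= n)%N]leq_eqVlt.
case: (eqVneq (nat_of_ord j) n) => [jn|]; last by [].
have jn' : j = n by apply: val_inj.
case sm: (s < m)%N => //=; exfalso; apply: no; exists s; by rewrite sm ps jn' eqxx.
Qed.

Lemma cardRB_n m (n : 'I_N) :
  #|RB p m n.+1| = (#|RB p m n| + ~~ [exists i : 'I_N, (i < m)%N && (p i == Some n)])%N.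
Proof.
rewrite (@card_add1 _ (RB p m n) _ n); first by rewrite /RB ltnn orbF.
by move=> s; rewrite /RB ltS_ord orbA.
Qed.

Lemma cardRB_m (m : 'I_N) n :
  #|RB p m.+1 n| = (#|RB p m n| + (if p m is Some j then (n <= j)%N else false))%N.
Proof.
have ex s : [exists i : 'I_N, (i < m.+1)%N && (p i == Some s)] =
    [exists i : 'I_N, (i < m)%N && (p i == Some s)] || (p m == Some s).
  apply/existsP/orP.
    case=> i /andP[]; rewrite ltS_ord => /orP[im pis|/eqP-> ->]; last by right.
    by left; apply/existsP; exists i; rewrite im.
  case=> [/existsP[i /andP[im pis]]|pms]; first by exists i; rewrite ltS_ord im.
  by exists m; rewrite ltS_ord eqxx orbT.
case pm: (p m) => [j|].
  rewrite (@card_add1 _ (RB p m n) _ j).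
    congr (_ + _)%N; rewrite /RB negb_or -leqNgt; case: existsP => //=.
    case=> i /andP[im /eqP pij]; move: im; by rewrite (pinj pij pm) ltnn.
  move=> s; rewrite /RB ex pm.
  have -> : (Some j == Some s) = (s == j) by apply/eqP/eqP=> [[]->|->].
  by case: [exists _, _]; case: (s < n)%N; case: (s == j).
rewrite addn0; apply: eq_card=> s; rewrite -!topredE /= /RB ex pm orbF //.
Qed.

Lemma cardRB_RA m n : (n <= m)%N -> (#|RB p m n| <= #|RA p m n|)%N.
Proof.
move=> nm; apply: subset_leq_card; apply/subsetP=> s; rewrite -!topredE /=.
exact: RB_RA.
Qed.

Lemma part3_Pm (m n : 'I_N) : (n < m)%N ->
  (p m = Some n <->
   [/\ relhomdim (Pm E p) m.+1 n.+1 = relhomdim (Pm E p) m n,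
       relhomdim (Pm E p) m n = (relhomdim (Pm E p) m n.+1 + 1)%N &
       (relhomdim (Pm E p) m n.+1 + 1)%N = (relhomdim (Pm E p) m.+1 n + 1)%N]).
Proof.
move=> nm.
have h1 := cardRB_RA (ltnW nm).
have h2 := cardRB_RA (nm : (n.+1 <= m)%N).
have h3 := cardRB_RA (leqW (ltnW nm) : (n <= m.+1)%N).
have h4 := cardRB_RA (leqW nm : (n.+1 <= m.+1)%N).
rewrite !relhomdim_Pm //.
move: h1 h2 h3 h4.
rewrite (cardRA_m m n.+1) (cardRB_m m n.+1) cardRA_m cardRB_m !cardRA_n !cardRB_n.
have yz : p m = Some n -> ~~ [exists i : 'I_N, (i < m)%N && (p i == Some n)].
  move=> pmn; apply/existsP=> [[i /andP[im /eqP pin]]].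
  by move: im; rewrite (pinj pin pmn) ltnn.
move: yz; rewrite /RC.
case: [exists i : 'I_N, (i < m)%N && (p i == Some n)] => /= yz.
  case pm: (p m) => [j|] /=; last by move=> H1 H2 H3 H4; split=> // -[]; lia.
  rewrite ltnS.
  have jn : j <> n by move=> e; rewrite e in pm; have := yz pm.
  case: (ltngtP j n) => [jn'|jn'|jn'] /=.
  - by move=> H1 H2 H3 H4; split=> [[/jn]//|[]]; lia.
  - by move=> H1 H2 H3 H4; split=> [[/jn]//|[]]; lia.
  - by exfalso; apply: jn; apply: val_inj.
case pm: (p m) => [j|] /=; last by move=> H1 H2 H3 H4; split=> // -[]; lia.
rewrite ltnS.
case: (ltngtP j n) => [jn'|jn'|jn'] /=.
- move=> H1 H2 H3 H4; split=> [[e]|[]]; last by lia.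
  by move: jn'; rewrite e ltnn.
- move=> H1 H2 H3 H4; split=> [[e]|[]]; last by lia.
  by move: jn'; rewrite e ltnn.
- have -> : j = n by apply: val_inj.
  move=> H1 H2 H3 H4; split=> // _; split; lia.
Qed.
End Elem3.
Section Helpers.
Variables (E : fieldType) (N : nat).

Lemma mul_entry_nz (x : 'rV[E]_N) (M : 'M[E]_N) j :
  (x *m M) 0 j != 0 -> exists k, x 0 k != 0 /\ M k j != 0.
Proof.
move=> H.
case: (boolP [exists k, (x 0 k != 0) && (M k j != 0)]) => [/existsP[k /andP[h1 h2]]|/existsPn H'].
  by exists k.
move: H; rewrite mxE big1 ?eqxx // => k _.
move: (H' k); rewrite negb_and !negbK => /orP[/eqP->|/eqP->]; by rewrite ?mul0r ?mulr0.
Qed.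

Lemma stable_S (U : 'M[E]_N) (P : pred 'I_N) : U \in unitmx ->
  (forall k j, U k j != 0 -> P k -> P j) ->
  forall x : 'rV[E]_N, (x <= S P)%MS -> (x *m invmx U <= S P)%MS.
Proof.
move=> uU H x hx; apply: submx_trans (submxMr _ hx) _.
by apply: stable_inv => //; apply: entry_stable.
Qed.

Lemma trig_unit (U : 'M[E]_N) : (forall k j, U k j != 0 -> (j <= k)%N) ->
  (forall k, U k k != 0) -> U \in unitmx.
Proof.
move=> tri dg; rewrite unitmxE det_trig.
  by rewrite unitfE; apply/prodf_neq0=> k _.
apply/is_trig_mxP=> k j kj; apply/eqP; apply/negPn/negP=> /tri.
by rewrite leqNgt kj.
Qed.

Lemma row_Pm_bvec (p : 'I_N -> option 'I_N) i j :
  row i (Pm E p) = bvec E j -> p i = Some j.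
Proof.
rewrite row_Pm; case: (p i) => [k|] e.
  have := congr1 (fun v : 'rV[E]_N => v 0 j) e; rewrite /bvec !mxE !eqxx /=.
  by case: (eqVneq j k) => [->//|_]; move/eqP; rewrite eq_sym oner_eq0.
have := congr1 (fun v : 'rV[E]_N => v 0 j) e; rewrite /bvec !mxE !eqxx /=.
by move/eqP; rewrite eq_sym oner_eq0.
Qed.
End Helpers.

Section Exist.
Variables (E : fieldType) (N : nat) (deg : 'I_N -> int) (D : 'M[E]_N).
Hypothesis hD : Mdiff deg D.

Record inv (i : nat) (U : 'M[E]_N) (p : 'I_N -> option 'I_N) : Prop := Inv {
  i_tri : forall k j : 'I_N, U k j != 0 -> (j <= k)%N;
  i_diag : forall k, U k k != 0;
  i_grad : forall k j, U k j != 0 -> deg j = deg k;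
  i_act : forall k : 'I_N, (k < i)%N -> row k U *m D = row k (Pm E p) *m U;
  i_inj : forall k k' j, p k = Some j -> p k' = Some j -> k = k';
  i_lt : forall k j, p k = Some j -> (j < k)%N;
  i_deg : forall k j, p k = Some j -> deg j = deg k - 1;
  i_none : forall k : 'I_N, (i <= k)%N -> p k = None }.

Lemma inv0 : inv 0 1%:M (fun _ => None).
Proof.
split=> //.
- by move=> k j; rewrite mxE; case: (eqVneq k j) => [->|] //; rewrite eqxx.
- by move=> k; rewrite mxE eqxx oner_eq0.
- by move=> k j; rewrite mxE; case: (eqVneq k j) => [->|] //; rewrite eqxx.
Qed.

Lemma actU i U p (I : inv i U p) (x : 'rV[E]_N) :
  (forall k, x 0 k != 0 -> (k < i)%N) -> x *m U *m D = x *m Pm E p *m U.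
Proof.
move=> sx; rewrite -!mulmxA !mulmx_sum_row; apply: eq_bigr=> k _.
case: (eqVneq (x 0 k) 0) => [->|nz]; first by rewrite !scale0r.
by rewrite !row_mul (i_act I (sx _ nz)).
Qed.

Lemma deg_D (i j : 'I_N) : D i j != 0 -> deg j = deg i - 1.
Proof. by case: hD => h _ _; apply: h. Qed.
Lemma lt_D (i j : 'I_N) : D i j != 0 -> (j < i)%N.
Proof. by case: hD => _ _ h; apply: h. Qed.
Lemma DD : D *m D = 0.
Proof. by case: hD. Qed.

Section Step.
Variables (i : nat) (U : 'M[E]_N) (p : 'I_N -> option 'I_N).
Hypothesis Hi : (i < N)%N.
Hypothesis I : inv i U p.
Let ii : 'I_N := Ordinal Hi.
Let uU : U \in unitmx := trig_unit (i_tri I) (i_diag I).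
Let v := bvec E ii *m D.
Let c := v *m invmx U.
Let c' := \row_k (if target p k then 0 else c 0 k).
Let e := \row_s (if p s is Some k then c 0 k else 0).
Let u := bvec E ii - e *m U.

Lemma c_lt k : c 0 k != 0 -> (k < i)%N.
Proof.
move=> nz.
have : (c <= S (fun k : 'I_N => (k < i)%N))%MS.
  apply: stable_S=> //.
    by move=> a b /(i_tri I) ba ai; apply: leq_ltn_trans ba ai.
  apply/memSP=> j; rewrite -leqNgt /v /bvec -rowE mxE => ij.
  by apply/eqP; apply/negPn/negP=> /lt_D; rewrite ltnNge ij.
move/memSP=> H; apply/negPn/negP=> nk; move: nz; by rewrite H ?eqxx.
Qed.

Lemma c_deg k : c 0 k != 0 -> deg k = deg ii - 1.
Proof.
move=> nz.
have : (c <= S (fun k : 'I_N => (deg k == (deg ii - 1)%R)%B))%MS.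
  apply: stable_S=> //.
    by move=> a b /(i_grad I) -> .
  apply/memSP=> j; rewrite /v /bvec -rowE mxE => nj.
  by apply/eqP; apply/negPn/negP=> /deg_D dj; move: nj; rewrite dj eqxx.
move/memSP=> H; apply/eqP/negPn/negP=> nk; move: nz; by rewrite H ?eqxx.
Qed.

Lemma cU : c *m U = v.
Proof. by rewrite /c mulmxKV. Qed.

Lemma c_none k : c 0 k != 0 -> p k = None.
Proof.
move=> nz.
have h0 : c *m Pm E p = 0.
  apply/eqP; rewrite -(mulmx_free_eq0' _ uU) -(actU I c_lt) cU.
  by rewrite /v -mulmxA DD mulmx0.
case pk: (p k) => [j|] //; move: nz.
by rewrite -(vPm_src (i_inj I) c pk) h0 mxE eqxx.
Qed.

Lemma e_lt s : e 0 s != 0 -> (s < i)%N.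
Proof.
rewrite mxE; case ps: (p s) => [k|]; last by rewrite eqxx.
move=> _; rewrite ltnNge; apply/negP=> /(i_none I); by rewrite ps.
Qed.

Lemma e_deg s : e 0 s != 0 -> deg s = deg ii.
Proof.
rewrite mxE; case ps: (p s) => [k|]; last by rewrite eqxx.
move=> /c_deg; rewrite (i_deg I ps) => /eqP; rewrite -subr_eq0 opprB addrA subrK subr_eq0.
by move/eqP.
Qed.

Lemma c_split : c = c' + e *m Pm E p.
Proof.
apply/rowP=> k; rewrite [RHS]mxE [c' 0 k]mxE.
case tk: (target p k).
  case/existsP: tk => s /eqP psk.
  by rewrite (vPm_src (i_inj I) e psk) [e 0 s]mxE psk add0r.
by rewrite (vPm_nt _ (negbT tk)) addr0.
Qed.

Lemma uD : u *m D = c' *m U.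
Proof.
rewrite /u mulmxBl -/v -cU (actU I e_lt) c_split mulmxDl.
by rewrite addrK.
Qed.

Lemma c'_nz k : c' 0 k != 0 -> [/\ (k < i)%N, deg k = deg ii - 1, p k = None & ~~ target p k].
Proof.
rewrite mxE; case tk: (target p k); first by rewrite eqxx.
by move=> nz; split; [exact: c_lt | exact: c_deg | exact: c_none |].
Qed.

Lemma eU_nz j : (e *m U) 0 j != 0 -> (j < i)%N /\ deg j = deg ii.
Proof.
case/mul_entry_nz=> s [es Usj]; split.
  exact: leq_ltn_trans (i_tri I Usj) (e_lt es).
by rewrite (i_grad I Usj) (e_deg es).
Qed.

Lemma u_nz j : u 0 j != 0 -> j = ii \/ ((j < i)%N /\ deg j = deg ii).
Proof.
move=> H; case: (eqVneq j ii) => [->|nji]; [by left|right].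
move: H; rewrite /u mxE [bvec E ii 0 j]mxE (negbTE nji) andbF /= add0r mxE oppr_eq0.
exact: eU_nz.
Qed.

Lemma u_ii : u 0 ii != 0.
Proof.
rewrite /u mxE [bvec E ii 0 ii]mxE !eqxx /= [(- (e *m U)) 0 ii]mxE.
case: (eqVneq ((e *m U) 0 ii) 0) => [->|/eU_nz[]]; first by rewrite oppr0 addr0 oner_eq0.
by rewrite ltnn.
Qed.

Lemma c'Pm : c' *m Pm E p = 0.
Proof.
apply/rowP=> j; rewrite [RHS]mxE.
case tj: (target p j); last by rewrite vPm_nt ?tj.
case/existsP: tj => s /eqP psj; rewrite (vPm_src (i_inj I) c' psj).
apply/eqP; apply/negPn/negP=> /c'_nz[_ _]; by rewrite psj.
Qed.

Lemma c'_lt k : c' 0 k != 0 -> (k < i)%N.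
Proof. by case/c'_nz. Qed.

Lemma step : exists U' p', inv i.+1 U' p'.
Proof.
case: (eqVneq c' 0) => [c'0|c'n0].
- pose U' := \matrix_k (if k == ii then u else row k U).
  have rU' k : row k U' = if k == ii then u else row k U by rewrite rowK.
  have eU' k j : U' k j = if k == ii then u 0 j else U k j.
    by rewrite /U' mxE; case: (k == ii) => //; rewrite mxE.
  exists U', p; split.
  + move=> k j; rewrite eU'; case: (eqVneq k ii) => [->|_]; last exact: (i_tri I).
    by case/u_nz=> [->//|[ji _]]; apply: ltnW.
  + move=> k; rewrite eU'; case: (eqVneq k ii) => [->|_]; [exact: u_ii|exact: (i_diag I)].
  + move=> k j; rewrite eU'; case: (eqVneq k ii) => [->|_]; last exact: (i_grad I).
    by case/u_nz=> [->//|[_ ->]].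
  + move=> k; rewrite ltnS leq_eqVlt => /orP[/eqP ki|ki].
      have -> : k = ii by apply: val_inj.
      rewrite rU' eqxx uD c'0 mul0mx row_Pm (i_none I (k:=ii) (leqnn i)) mul0mx //.
    have kii : k != ii by apply/eqP=> e1; move: ki; rewrite e1 ltnn.
    rewrite rU' (negbTE kii) (i_act I ki) !row_Pm.
    case pk: (p k) => [j|]; last by rewrite !mul0mx.
    have jii : j != ii.
      by apply/eqP=> e1; move: (leq_trans (i_lt I pk) (ltnW ki)); rewrite e1 ltnn.
    by rewrite /bvec -!rowE rU' (negbTE jii).
  + exact: (i_inj I).
  + exact: (i_lt I).
  + exact: (i_deg I).
  + by move=> k ik; apply: (i_none I); apply: ltnW.
- have [k0 ck0] : exists k0, c' 0 k0 != 0.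
    case: (boolP [exists k, c' 0 k != 0]) => [/existsP//|/existsPn H].
    exfalso; move/eqP: c'n0; apply; apply/rowP=> k; rewrite [RHS]mxE.
    by apply/eqP; move: (H k); rewrite negbK.
  case: (@arg_maxnP _ k0 (fun k => c' 0 k != 0) (fun k : 'I_N => nat_of_ord k) ck0).
  move=> j0 cj0 jmax'.
  have jmax k : c' 0 k != 0 -> (k <= j0)%N by move=> ck; exact: (jmax' k ck).
  case: (c'_nz cj0) => j0i dj0 pj0 tj0.
  have j0ii : j0 != ii by apply/eqP=> e1; move: j0i; rewrite e1 ltnn.
  pose r := c' *m U.
  pose U' := \matrix_k (if k == ii then u else if k == j0 then r else row k U).
  pose p' := fun k => if k == ii then Some j0 else p k.
  have rU' k : row k U' = if k == ii then u else if k == j0 then r else row k U by rewrite rowK.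
  have eU' k j : U' k j = if k == ii then u 0 j else if k == j0 then r 0 j else U k j.
    by rewrite /U' mxE; case: (k == ii) => //; case: (k == j0) => //; rewrite mxE.
  have r_nz j : r 0 j != 0 -> (j <= j0)%N /\ deg j = deg j0.
    case/mul_entry_nz=> k [ck Ukj]; split.
      exact: leq_trans (i_tri I Ukj) (jmax _ ck).
    by rewrite (i_grad I Ukj) dj0; case: (c'_nz ck).
  have r_j0 : r 0 j0 != 0.
    rewrite mxE (bigD1 j0) //= big1 ?addr0; first by rewrite mulf_neq0 // (i_diag I).
    move=> k kj0; case: (eqVneq (c' 0 k) 0) => [->|ck]; first by rewrite mul0r.
    have kl : (k < j0)%N.
      by rewrite ltn_neqAle (jmax _ ck) andbT; apply: contra kj0 => /eqP/val_inj->.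
    case: (eqVneq (U k j0) 0) => [->|/(i_tri I)]; first by rewrite mulr0.
    by rewrite leqNgt kl.
  have rD : r *m D = 0 by rewrite /r (actU I c'_lt) c'Pm mul0mx.
  exists U', p'; split.
  + move=> k j; rewrite eU'; case: (eqVneq k ii) => [->|_].
      by case/u_nz=> [->//|[ji _]]; apply: ltnW.
    case: (eqVneq k j0) => [->|_]; last exact: (i_tri I).
    by case/r_nz.
  + move=> k; rewrite eU'; case: (eqVneq k ii) => [->|_]; first exact: u_ii.
    case: (eqVneq k j0) => [->//|_]; exact: (i_diag I).
  + move=> k j; rewrite eU'; case: (eqVneq k ii) => [->|_].
      by case/u_nz=> [->//|[_ ->]].
    case: (eqVneq k j0) => [->|_]; last exact: (i_grad I).
    by case/r_nz.
  + move=> k; rewrite ltnS leq_eqVlt => /orP[/eqP ki|ki].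
      have -> : k = ii by apply: val_inj.
      rewrite rU' eqxx uD row_Pm /p' eqxx /bvec -rowE rU' (negbTE j0ii) eqxx //.
    have kii : k != ii by apply/eqP=> e1; move: ki; rewrite e1 ltnn.
    rewrite rU' (negbTE kii) row_Pm /p' (negbTE kii).
    case: (eqVneq k j0) => [->|kj0].
      by rewrite pj0 mul0mx rD.
    rewrite (i_act I ki) row_Pm.
    case pk: (p k) => [j|]; last by rewrite !mul0mx.
    have jii : j != ii.
      by apply/eqP=> e1; move: (leq_trans (i_lt I pk) (ltnW ki)); rewrite e1 ltnn.
    have jj0 : j != j0.
      apply/eqP=> e1; move: tj0; rewrite -e1; case/existsP; exists k; by rewrite pk.
    by rewrite /bvec -!rowE rU' (negbTE jii) (negbTE jj0).
  + move=> k k' j; rewrite /p'.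
    case: (eqVneq k ii) => [->|kii]; case: (eqVneq k' ii) => [->|k'ii] //.
    * move=> [<-] pk'; exfalso; move/negP: tj0; apply; apply/existsP; exists k'; by rewrite pk'.
    * move=> pk [e1]; rewrite -e1 in pk; exfalso; move/negP: tj0; apply.
      apply/existsP; exists k; by rewrite pk.
    * exact: (i_inj I).
  + move=> k j; rewrite /p'; case: (eqVneq k ii) => [->|_]; last exact: (i_lt I).
    by move=> [<-].
  + move=> k j; rewrite /p'; case: (eqVneq k ii) => [->|_]; last exact: (i_deg I).
    by move=> [<-].
  + move=> k ik; rewrite /p'; case: (eqVneq k ii) => [e1|_].
      by move: ik; rewrite e1 ltnn.
    by apply: (i_none I); apply: ltnW.
Qed.
End Step.
End Exist.
Section Final.
Variables (E : fieldType) (N : nat) (deg : 'I_N -> int) (D : 'M[E]_N).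
Hypothesis hD : Mdiff deg D.

Definition goodp (p : 'I_N -> option 'I_N) :=
  [/\ (forall i i' j, p i = Some j -> p i' = Some j -> i = i'),
      (forall i j, p i = Some j -> deg j = deg i - 1),
      (forall i j, p i = Some j -> (j < i)%N) &
      (forall i j, p i = Some j -> p j = None)].

Lemma Pm_nil (p : 'I_N -> option 'I_N) : Pm E p *m Pm E p = 0 ->
  forall i j, p i = Some j -> p j = None.
Proof.
move=> H i j pij; case pj: (p j) => [l|] //; exfalso.
have := congr1 (row i) H; rewrite row_mul row_Pm pij /bvec -rowE row_Pm pj row0.
move/(congr1 (fun v : 'rV[E]_N => v 0 l)); rewrite !mxE !eqxx /=.
by move/eqP; rewrite oner_eq0.
Qed.

Lemma Pm_entry (p : 'I_N -> option 'I_N) i j : Pm E p i j != 0 -> p i = Some j.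
Proof. by rewrite mxE; case: (p i =P Some j) => // _ /=; rewrite eqxx. Qed.

Lemma elem_form D1 : Mdiff deg D1 -> elementary D1 ->
  exists p, D1 = Pm E p /\ goodp p.
Proof.
move=> md [el1 el2].
pose p i := [pick j | row i D1 == bvec E j].
have eD : D1 = Pm E p.
  apply/row_matrixP=> i; rewrite row_Pm /p; case: pickP => [j /eqP -> //|none].
  case: (el1 i) => [->//|[j e]]; move: (none j); by rewrite e eqxx.
exists p; split=> //; case: md => [md1 md2 md3]; split.
- move=> i i' j pij pi'j; apply: (el2 _ _ j); by rewrite eD row_Pm ?pij ?pi'j.
- by move=> i j pij; apply: md1; rewrite eD mxE pij eqxx oner_eq0.
- by move=> i j pij; apply: md3; rewrite eD mxE pij eqxx oner_eq0.
- by apply: Pm_nil; rewrite -eD.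
Qed.

Lemma Pm_elem (p : 'I_N -> option 'I_N) : goodp p -> elementary (Pm E p).
Proof.
case=> pinj _ _ _; split.
  by move=> i; rewrite row_Pm; case: (p i) => [j|]; [right; exists j|left].
by move=> x y z /row_Pm_bvec px /row_Pm_bvec py; apply: pinj px py.
Qed.

Lemma inv_all i : (i <= N)%N -> exists U p, inv deg D i U p.
Proof.
elim: i => [_|i IH Hi]; first by exists 1%:M, (fun _ => None); exact: inv0.
case: (IH (ltnW Hi)) => U [p I]; exact: (step hD Hi I).
Qed.

Lemma existence : exists p G, [/\ goodp p, AutT deg G & Pm E p = invmx G *m D *m G].
Proof.
case: (inv_all (leqnn N)) => U [p I].
have uU : U \in unitmx := trig_unit (i_tri I) (i_diag I).
have UD : U *m D = Pm E p *m U.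
  by apply/row_matrixP=> k; rewrite !row_mul (i_act I (ltn_ord k)).
have eP : Pm E p = U *m D *m invmx U by rewrite UD mulmxK.
exists p, (invmx U); split; last by rewrite invmxK.
- split; [exact: (i_inj I)|exact: (i_deg I)|exact: (i_lt I)|].
  apply: Pm_nil; rewrite eP -!mulmxA (mulmxA (invmx U)) mulVmx // mul1mx.
  by rewrite (mulmxA D) (DD hD) mul0mx mulmx0.
- have ent (P : pred 'I_N) k j : (forall a b, U a b != 0 -> P a -> P b) -> P k ->
      invmx U k j != 0 -> P j.
    move=> HP Pk nz.
    have : (bvec E k *m invmx U <= S P)%MS by apply: stable_S=> //; apply: bvecS.
    move/memSP/(_ j); rewrite /bvec -rowE mxE => h; apply/negPn/negP=> /h.
    by move/eqP; rewrite (negbTE nz).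
  split; first by rewrite unitmx_inv.
    move=> k j nz; apply/eqP.
    apply: (ent (fun a => deg a == deg k)) nz => // a b /(i_grad I) -> //.
  move=> k j nz.
  apply: (ent (fun a : 'I_N => (a <= k)%N)) nz => // a b /(i_tri I) ba ak.
  exact: leq_trans ba ak.
Qed.

Lemma Pm_Mdiff p : goodp p -> Pm E p *m Pm E p = 0 -> Mdiff deg (Pm E p).
Proof.
case=> _ pdeg plt _ PP; split=> //.
  by move=> i j /Pm_entry /pdeg.
by move=> i j /Pm_entry /plt.
Qed.

Lemma equiv_sq D1 : equivM deg D D1 -> D1 *m D1 = 0.
Proof.
case=> G [[uG _ _] ->].
rewrite -!mulmxA (mulmxA G) mulmxV // mul1mx (mulmxA D) (DD hD).
by rewrite mul0mx mulmx0.
Qed.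

Lemma ess_inv p G : AutT deg G -> Pm E p = invmx G *m D *m G -> goodp p ->
  forall i : 'I_N, ess p i = ~~ (imH D i.+1 == imH D i)%MS.
Proof.
move=> aG e [pinj _ _ _] i.
by rewrite -(imH_conj_eq D aG) -e imH_eq_Pm // negbK.
Qed.

Lemma dpair_Pm i j : dpair deg D i j ->
  exists p G, [/\ goodp p, AutT deg G, Pm E p = invmx G *m D *m G & p i = Some j].
Proof.
case=> D1 [md [el [[G [aG eG]] r]]].
case: (elem_form md el) => p [eD gp].
exists p, G; split; [exact: gp | exact: aG | by rewrite -eD | ].
by move: r; rewrite eD => /row_Pm_bvec.
Qed.

Section WithP.
Variables (p : 'I_N -> option 'I_N) (G : 'M[E]_N).
Hypothesis gp : goodp p.
Hypothesis aG : AutT deg G.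
Hypothesis eG : Pm E p = invmx G *m D *m G.

Lemma essE i : essential deg D i <-> ess p i.
Proof.
split.
- move=> H; rewrite /ess; case pi: (p i) => [j|] /=.
    exfalso; case: (H j) => + _; apply; exists (Pm E p); split.
      by apply: Pm_Mdiff => //; apply: equiv_sq; exists G.
    split; first exact: Pm_elem.
    by split; [exists G|rewrite row_Pm pi].
  apply/negP=> /existsP[s /eqP psi].
  case: (H s) => _; apply; exists (Pm E p); split.
    by apply: Pm_Mdiff => //; apply: equiv_sq; exists G.
  split; first exact: Pm_elem.
  by split; [exists G|rewrite row_Pm psi].
- move=> es j; split=> /dpair_Pm[p' [G' [gp' aG' eG' pij]]].
  + have : ess p' i by rewrite (ess_inv aG' eG' gp') -(ess_inv aG eG gp).
    by rewrite /ess pij.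
  + have : ess p' i by rewrite (ess_inv aG' eG' gp') -(ess_inv aG eG gp).
    rewrite /ess => /andP[_ /negP]; apply; apply/existsP; exists j; by rewrite pij.
Qed.
End WithP.

End Final.

Theorem lemma3p2 (E : fieldType) (N : nat) (deg : 'I_N -> int)
    (D : 'M[E]_N) (hD : Mdiff deg D) :
  (* (1) *)
  ((forall (i : 'I_N) (l : int), deg i = l ->
      (essential deg D i <->
       imdim deg D l i.+1 = (imdim deg D l i + 1)%N)) /\
   (forall k : int,
      exists S : {set 'I_N},
        (forall i, i \in S <-> essential deg D i /\ deg i = k) /\
        #|S| = homdim deg D k)) /\
  (* (2) *)
  (forall i : 'I_N,
      ~ essential deg D i <-> (imH D i.+1 == imH D i)%MS) /\
  (* (3) *)
  (forall m n : 'I_N, (n < m)%N ->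
      (dpair deg D m n <->
       [/\ relhomdim D m.+1 n.+1 = relhomdim D m n,
           relhomdim D m n = (relhomdim D m n.+1 + 1)%N &
           (relhomdim D m n.+1 + 1)%N = (relhomdim D m.+1 n + 1)%N])).
Proof.
have [p [G [gp aG eG]]] := existence hD.
have gp' := gp; case: gp' => pinj pdeg plt pnil.
split; [split|split].
- move=> i l dil; rewrite (essE hD gp aG eG) -!(imdim_conj D aG) -eG.
  rewrite !(imdim_Pm E pinj pdeg).
  rewrite (cnt_lt (fun s => (deg s == l) && ess p s) i) /= dil eqxx /=.
  by case: (ess p i); split=> //= H; lia.
- move=> k; exists [set s | ess p s && (deg s == k)]; split.
    move=> i; rewrite inE (essE hD gp aG eG).
    by split=> [/andP[-> /eqP ->]|[-> ->]] //; rewrite eqxx.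
  rewrite -(homdim_conj D aG) -eG (homdim_Pm E pinj pdeg pnil).
  by apply: eq_card=> s; rewrite inE.
- move=> i; rewrite (essE hD gp aG eG) (ess_inv aG eG gp).
  by split; [move=> h; apply/negPn/negP | move=> h /negP; apply].
- move=> m n nm; split.
    case/dpair_Pm=> p' [G' [gp' aG' eG' pmn]].
    case: gp' => pinj' _ plt' pnil'.
    have := (part3_Pm E pinj' plt' pnil' nm).1 pmn.
    by rewrite eG' !(relhomdim_conj D aG').
  move=> H.
  have pmn : p m = Some n.
    apply/(part3_Pm E pinj plt pnil nm).
    by rewrite eG !(relhomdim_conj D aG).
  exists (Pm E p); split.
    by apply: Pm_Mdiff => //; apply: (equiv_sq hD); exists G.
  split; first exact: (Pm_elem E gp).
  by split; [exists G|rewrite row_Pm pmn].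
Qed.
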